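(* Fix $l,r>0$, $0<\alpha<\beta<1$ and $Q_0\in\mathbb{R}$. Let $A^*\in(0,A_M)$ be the point with $B(A^* )=A^*$ and set $B^*=B(A^* )$; let $\hat A\in(0,A_M)$ be the point with $N(\hat A)=0$ and set $\hat B=B(\hat A)$. Then: (i) if $l<r$ then $l<\hat A<A^*=B^*<\hat B<r$; (ii) if $l>r$ then $l>\hat A>A^*=B^*>\hat B>r$; (iii) if $l=r$ then $\hat A=\hat B=A^*=B^*=l=r$.
   Context: For $A\in(0,A_M)$, where $A_M=l+\frac{\alpha}{1-\beta}r$, define $B=B(A)=\frac{1-\beta}{\alpha}(l-A)+r$ (so $B>0$ on this interval), $S_a=\sqrt{Q_0^2+A^2}$, $S_b=\sqrt{Q_0^2+B^2}$ and $N=N(A)=A-l+S_a-S_b$. (Here $A,B$ represent geometric means of the two ion concentrations at the points $x=a$ and $x=b$ in a zero-current Poisson–Nernst–Planck model with boundary concentrations $l,r$, permanent charge $2Q_0$ on $(a,b)$, and $\alpha=H(a)/H(1)$, $\beta=H(b)/H(1)$, $H(x)=\int_0^x ds/h(s)$.) The function $B(A)-A$ is strictly decreasing, positive near $0^+$ and negative near $A_M^-$, so $A^*$ exists uniquely; $N$ is strictly increasing in $A$ with $N(0^+)<0<N(A_M^-)$, so $\hat A$ exists uniquely. *)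

(* Defs.v *)
From Stdlib Require Import Reals Lra.
Open Scope R_scope.

Definition A_M (l r alpha beta : R) : R := l + alpha / (1 - beta) * r.

Definition Bfun (l r alpha beta : R) (A : R) : R :=
  (1 - beta) / alpha * (l - A) + r.

Definition Nfun (l r alpha beta Q0 : R) (A : R) : R :=
  A - l + sqrt (Q0 ^ 2 + A ^ 2) - sqrt (Q0 ^ 2 + (Bfun l r alpha beta A) ^ 2).

(* Main.v *)
Require Import Defs.
From Stdlib Require Import Reals Lra Psatz.
Open Scope R_scope.

Lemma sq_le (Q x y : R) : 0 < x -> x <= y -> sqrt (Q ^ 2 + x ^ 2) <= sqrt (Q ^ 2 + y ^ 2).
Proof. intros. apply sqrt_le_1_alt. nra. Qed.

Lemma sq_lt (Q x y : R) : 0 < x -> x < y -> sqrt (Q ^ 2 + x ^ 2) < sqrt (Q ^ 2 + y ^ 2).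
Proof. intros. apply sqrt_lt_1_alt. split; nra. Qed.

Theorem lemma3p10 (l r alpha beta Q0 Astar Ahat : R) :
  0 < l -> 0 < r -> 0 < alpha -> alpha < beta -> beta < 1 ->
  0 < Astar < A_M l r alpha beta -> Bfun l r alpha beta Astar = Astar ->
  0 < Ahat < A_M l r alpha beta -> Nfun l r alpha beta Q0 Ahat = 0 ->
  let Bstar := Bfun l r alpha beta Astar in
  let Bhat := Bfun l r alpha beta Ahat in
  (l < r -> l < Ahat /\ Ahat < Astar /\ Astar = Bstar /\ Bstar < Bhat /\ Bhat < r) /\
  (l > r -> l > Ahat /\ Ahat > Astar /\ Astar = Bstar /\ Bstar > Bhat /\ Bhat > r) /\
  (l = r -> Ahat = Bhat /\ Bhat = Astar /\ Astar = Bstar /\ Bstar = l /\ l = r).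
Proof.
  intros hl hr ha hab hb [hs1 hs2] hsB [hh1 hh2] hN Bstar Bhat.
  unfold Bstar, Bhat in *. clear Bstar Bhat.
  unfold Nfun in hN. unfold A_M in *.
  set (k := (1 - beta) / alpha) in *.
  set (m := alpha / (1 - beta)) in *.
  assert (hk : 0 < k) by (unfold k; apply Rdiv_lt_0_compat; lra).
  assert (hkm : k * m = 1) by (unfold k, m; field; lra).
  assert (hm : 0 < m) by (unfold m; apply Rdiv_lt_0_compat; lra).
  unfold Bfun in *. fold k in hsB, hN |- *.
  set (Bh := k * (l - Ahat) + r) in *.
  assert (hBpos : 0 < Bh) by (unfold Bh; nra).
  set (Sa := sqrt (Q0 ^ 2 + Ahat ^ 2)) in *.
  set (Sb := sqrt (Q0 ^ 2 + Bh ^ 2)) in *.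
  assert (HS1 : Ahat < Bh -> Sa < Sb) by (intro; apply sq_lt; lra).
  assert (HS2 : Bh < Ahat -> Sb < Sa) by (intro; apply sq_lt; lra).
  assert (HS3 : Ahat <= Bh -> Sa <= Sb) by (intro; apply sq_le; lra).
  assert (HS4 : Bh <= Ahat -> Sb <= Sa) by (intro; apply sq_le; lra).
  assert (Hmono : forall x y, x < y -> k * (l - y) + r < k * (l - x) + r) by (intros; nra).
  split; [|split].
  - intro hlr.
    assert (l < Astar) by nra.
    assert (Astar < r) by nra.
    assert (l < Ahat).
    { destruct (Rle_or_lt Ahat l) as [h|h]; [|exact h].
      assert (Ahat < Bh) by (unfold Bh; nra). specialize (HS1 H1). lra. }
    assert (Ahat < Astar).
    { destruct (Rle_or_lt Astar Ahat) as [h|h]; [|exact h].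
      assert (Bh <= Ahat) by (unfold Bh; nra). specialize (HS4 H2). lra. }
    repeat split; try lra; try (rewrite hsB; reflexivity).
    + rewrite hsB. unfold Bh in *. nra.
    + unfold Bh in *. nra.
  - intro hlr.
    assert (Astar < l) by nra.
    assert (r < Astar) by nra.
    assert (Ahat < l).
    { destruct (Rle_or_lt l Ahat) as [h|h]; [|exact h].
      assert (Bh < Ahat) by (unfold Bh; nra). specialize (HS2 H1). lra. }
    assert (Astar < Ahat).
    { destruct (Rle_or_lt Ahat Astar) as [h|h]; [|exact h].
      assert (Ahat <= Bh) by (unfold Bh; nra). specialize (HS3 H2). lra. }
    repeat split; try lra; try (rewrite hsB; reflexivity).
    + rewrite hsB. unfold Bh in *. nra.
    + unfold Bh in *. nra.
  - intro hlr. subst r.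
    assert (Astar = l) by nra.
    assert (Ahat = l).
    { destruct (Rtotal_order Ahat l) as [h|[h|h]]; [|exact h|].
      - assert (Ahat < Bh) by (unfold Bh; nra). specialize (HS1 H0). lra.
      - assert (Bh < Ahat) by (unfold Bh; nra). specialize (HS2 H0). lra. }
    subst Ahat. unfold Bh. rewrite hsB, H. repeat split; ring.
Qed.
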